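(* Let $\mathbf{k}$ be an algebraically closed field of prime characteristic $p$ and let $R(p)$ be the Radford algebra over $\mathbf{k}$. Then the minimal polynomial of the sequence $\{\nu_n(R(p))\}_{n\ge1}$ of higher Frobenius–Schur indicators of $R(p)$ is $f(x)=x^p-1$.
   Context: The Radford algebra $R(p)$ is the Hopf algebra over $\mathbf{k}$ generated as an algebra by $g,x$ subject to the relations $g^p=1$, $x^p=x$, $gx-xg=g^2-g$ if $p>2$, and $g^2=1$, $x^2=x$, $gx-xg=1-g$ if $p=2$; its coalgebra structure is given by $\Delta(g)=g\otimes g$, $\Delta(x)=x\otimes 1+g\otimes x$, $\varepsilon(g)=1$, $\varepsilon(x)=0$. For a finite-dimensional Hopf algebra $H$ with multiplication $m$, comultiplication $\Delta$, counit $\varepsilon$ and antipode $S$: let $\Delta^{(1)}=\mathrm{id}$, $\Delta^{(n)}=(\Delta^{(n-1)}\otimes\mathrm{id})\circ\Delta$ for $n\ge 2$, $m^{(n)}(h_1\otimes\cdots\otimes h_n)=h_1\cdots h_n$, $P_0(h)=\varepsilon(h)1_H$, $P_n=m^{(n)}\circ\Delta^{(n)}$ for $n\ge1$, and $\nu_n(H)=\mathrm{Tr}(S\circ P_{n-1})$. A sequence $\{a_n\}_{n\ge1}$ in $\mathbf{k}$ satisfies a nonzero polynomial $f(x)=f_0+f_1x+\cdots+f_mx^m\in\mathbf{k}[x]$ if $f_0a_n+f_1a_{n+1}+\cdots+f_ma_{n+m}=0$ for all $n\ge1$; the sequence is linearly recursive if it satisfies some nonzero polynomial, and its minimal polynomial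 is the monic polynomial of least degree that it satisfies. *)

(* Defs.v *)
From HB Require Import structures.
From mathcomp Require Import all_boot all_order all_algebra all_field.
Set Implicit Arguments. Unset Strict Implicit. Unset Printing Implicit Defensive.
Import Order.TTheory GRing.Theory Num.Theory.
Local Open Scope ring_scope.

(* The Radford algebra R(p) over a field K, realised concretely on its PBW   *)
(* basis {g^i x^j | 0 <= i, j < p}.  An element is stored as a p x p matrix *)
(* A : 'M[K]_p, A i j being the coefficient of g^i x^j.                       *)
Section Radford.
Variables (K : fieldType) (p : nat).

Definition RH := 'M[K]_p.

Definition rbasis (i j : 'I_p) : RH := delta_mx i j.

(* exponent of x in x * x^j, using x^p = x *)
Definition nextx (j : 'I_p) : 'I_p :=
  if j.+1 == p then ordS (ordS j) else ordS j.

Definition lin_ext (f : 'I_p -> 'I_p -> RH) (A : RH) : RH :=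
  \sum_(i < p) \sum_(j < p) A i j *: f i j.

(* left multiplication by g and by x.  Since g^-1 x g = x - (g - 1)
   (from g x - x g = g^2 - g), one has
   x g^i x^j = g^i x^(j+1) + i g^i x^j - i g^(i+1) x^j. *)
Definition Lg : RH -> RH := lin_ext (fun i j => rbasis (ordS i) j).
Definition Lx : RH -> RH :=
  lin_ext (fun i j => rbasis i (nextx j) + (i : nat)%:R *: rbasis i j
                      - (i : nat)%:R *: rbasis (ordS i) j).

Definition rmul (A B : RH) : RH :=
  \sum_(i < p) \sum_(j < p) A i j *: iter i Lg (iter j Lx B).

Definition rone : RH := \matrix_(i, j) ((i == 0%N :> nat) && (j == 0%N :> nat))%:R.
Definition rg : RH := \matrix_(i, j) ((i == 1%N :> nat) && (j == 0%N :> nat))%:R.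
Definition rginv : RH := \matrix_(i, j) ((i == p.-1 :> nat) && (j == 0%N :> nat))%:R.
Definition rx : RH := \matrix_(i, j) ((i == 0%N :> nat) && (j == 1%N :> nat))%:R.

(* counit: eps(g) = 1, eps(x) = 0, so eps(g^i x^j) = [j == 0] *)
Definition reps (A : RH) : K := \sum_(i < p) \sum_(j < p) (j == 0%N :> nat)%:R * A i j.

(* antipode: S(g) = g^-1, S(x) = - g^-1 x, S anti-multiplicative:
   S(g^i x^j) = S(x)^j S(g)^i *)
Definition rSx : RH := - rmul rginv rx.
Definition rS : RH -> RH :=
  lin_ext (fun i j => iter j (rmul rSx) (iter i (rmul rginv) rone)).

(* H (x) H: T = sum_(i,j) (g^i x^j) (x) T i j *)
Definition RT := 'M[RH]_p.
Definition rtens (a b : RH) : RT := \matrix_(i, j) (a i j *: b).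
Definition rtscale (c : K) (T : RT) : RT := \matrix_(i, j) (c *: T i j).
Definition rtmul (T U : RT) : RT :=
  \matrix_(a, b) \sum_(i < p) \sum_(j < p) \sum_(k < p) \sum_(l < p)
     (rmul (rbasis i j) (rbasis k l)) a b *: rmul (T i j) (U k l).

(* comultiplication: Delta(g) = g (x) g, Delta(x) = x (x) 1 + g (x) x,
   Delta(g^i x^j) = Delta(g)^i Delta(x)^j *)
Definition rDg : RT := rtens rg rg.
Definition rDx : RT := rtens rx rone + rtens rg rx.
Definition rDelta (A : RH) : RT :=
  \sum_(i < p) \sum_(j < p)
     rtscale (A i j) (iter i (rtmul rDg) (iter j (rtmul rDx) (rtens rone rone))).

(* P_0(h) = eps(h) 1, P_1 = id, and P_n = m^(n) o Delta^(n); since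
   Delta^(n) = (Delta^(n-1) (x) id) o Delta, this unfolds to
   P_n(h) = sum P_(n-1)(h_(1)) h_(2). *)
Fixpoint rP (n : nat) (A : RH) : RH :=
  match n with
  | 0%N => reps A *: rone
  | 1%N => A
  | S ((S _) as m) =>
      let D := rDelta A in
      \sum_(i < p) \sum_(j < p) rmul (rP m (rbasis i j)) (D i j)
  end.

Definition rtrace (f : RH -> RH) : K :=
  \sum_(i < p) \sum_(j < p) (f (rbasis i j)) i j.

Definition radford_nu (n : nat) : K := rtrace (fun A => rS (rP n.-1 A)).

End Radford.

Definition seq_satisfies (K : fieldType) (a : nat -> K) (f : {poly K}) : Prop :=
  forall n : nat, (1 <= n)%N -> \sum_(i < size f) f`_i * a (n + i)%N = 0.

Definition is_minimal_poly_seq (K : fieldType) (a : nat -> K) (f : {poly K}) : Prop :=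
  [/\ f \is monic, seq_satisfies a f &
      forall g : {poly K}, g != 0 -> seq_satisfies a g -> (size f <= size g)%N].

(* Main.v *)
Require Import Defs.
From HB Require Import structures.
From mathcomp Require Import all_boot all_order all_algebra all_field.
From mathcomp Require Import ring zify.
Set Implicit Arguments. Unset Strict Implicit. Unset Printing Implicit Defensive.
Import GRing.Theory.
Local Open Scope ring_scope.

Section R.
Variables (K : fieldType) (q : nat).
Local Notation p := q.+2.
Local Notation H := (RH K p).
Implicit Types (A B : H) (t i j : 'I_p).

Lemma ordS_add1 (i : 'I_p) : ordS i = i + 1.
Proof. by apply: val_inj => /=; rewrite modnDmr addn1. Qed.

Lemma lin_extE f A t j : lin_ext f A t j = \sum_i \sum_l A i l * f i l t j.
Proof.
rewrite /lin_ext summxE; apply: eq_bigr => i _; rewrite summxE.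
by apply: eq_bigr => l _; rewrite mxE.
Qed.

Lemma LgE A t j : Lg A t j = A (t - 1) j.
Proof.
rewrite /Lg lin_extE (bigD1 (t - 1)) //= [X in _ + X]big1 ?addr0; last first.
  move=> i ne; apply: big1 => l _; rewrite /rbasis mxE ordS_add1.
  case: eqP => [e|]; last by rewrite mulr0.
  by move: ne; rewrite e addrK eqxx.
rewrite (bigD1 j) //= [X in _ + X]big1 ?addr0; last first.
  by move=> l ne; rewrite /rbasis mxE [j == l]eq_sym (negbTE ne) andbF mulr0.
by rewrite /rbasis mxE ordS_add1 subrK !eqxx mulr1.
Qed.

Lemma sum_ind1 (F : 'I_p -> K) t : \sum_i F i * (t == i)%:R = F t.
Proof.
rewrite (bigD1 t) //= [X in _ + X]big1 ?addr0 ?eqxx ?mulr1 //.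
by move=> i ne; rewrite eq_sym (negbTE ne) mulr0.
Qed.

Lemma LxE A t j : Lx A t j = \sum_l A t l * (j == nextx l)%:R
   + (nat_of_ord t)%:R * A t j - (nat_of_ord (t - 1))%:R * A (t - 1) j.
Proof.
rewrite /Lx lin_extE.
transitivity (\sum_i (\sum_l A i l * (j == nextx l)%:R * (t == i)%:R)
  + \sum_i (\sum_l (nat_of_ord i)%:R * A i l * (j == l)%:R) * (t == i)%:R
  - \sum_i (\sum_l (nat_of_ord i)%:R * A i l * (j == l)%:R) * (t == i + 1)%:R).
  rewrite -big_split -sumrB /=; apply: eq_bigr => i _.
  rewrite !big_distrl -big_split -sumrB /=; apply: eq_bigr => l _.
  rewrite /rbasis !mxE ordS_add1 /= -!mulnb !natrM.
  ring.
congr (_ + _ - _).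
- rewrite exchange_big /=; apply: eq_bigr => l _.
  by rewrite (sum_ind1 (fun i => A i l * (j == nextx l)%:R)).
- rewrite sum_ind1 (bigD1 j) //= [X in _ + X]big1 ?addr0 ?eqxx ?mulr1 //.
  by move=> l ne; rewrite eq_sym (negbTE ne) mulr0.
- rewrite (bigD1 (t - 1)) //= [X in _ + X]big1 ?addr0 ?subrK ?eqxx ?mulr1.
    rewrite (bigD1 j) //= [X in _ + X]big1 ?addr0 ?eqxx ?mulr1 //.
    by move=> l ne; rewrite eq_sym (negbTE ne) mulr0.
  move=> i ne; case: eqP => [e|]; last by rewrite mulr0.
  by move: ne; rewrite e addrK eqxx.
Qed.

Definition Fd (d : nat) A := forall t j : 'I_p, (d < j)%N -> A t j = 0.

Lemma Fd_mono d e A : (d <= e)%N -> Fd d A -> Fd e A.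
Proof. by move=> de FA t j ej; apply: FA; apply: leq_ltn_trans ej. Qed.

Lemma nextxE (l : 'I_p) : (nextx l : nat) = if l.+1 == p then 1%N else l.+1.
Proof.
rewrite /nextx; case: eqP => [e|ne] /=; first by rewrite e modnn.
rewrite modn_small //; have := ltn_ord l; rewrite leq_eqVlt.
by case/orP => // /eqP.
Qed.

Lemma Lx_F d A : Fd d A -> Fd d.+1 (Lx A).
Proof.
move=> FA t j dj; have dj' : (d < j)%N by apply: ltnW.
rewrite LxE !FA // !mulr0 subr0 addr0 big1 // => l _.
case: eqP => [e|]; last by rewrite mulr0.
move: dj; rewrite e nextxE; case: eqP => [_|_] //.
by move=> dl; rewrite FA ?mul0r.
Qed.

Lemma Lx_top A t (j j' : 'I_p) : Fd j' A -> j = j'.+1 :> nat -> Lx A t j = A t j'.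
Proof.
move=> FA jj; rewrite LxE (FA t j) ?(FA (t-1) j) ?jj // !mulr0 subr0 addr0.
rewrite (bigD1 j') //= [X in _ + X]big1 ?addr0.
  suff -> : j == nextx j' by rewrite mulr1.
  apply/eqP/val_inj; rewrite /= nextxE jj; case: eqP => // e.
  by have := ltn_ord j; rewrite jj e ltnn.
move=> l ne; case: eqP => [e|]; last by rewrite mulr0.
move: jj; rewrite e nextxE; case: eqP => [lp|_].
  move=> [] j0; rewrite FA ?mul0r //.
  by rewrite -j0; move/eqP: lp; rewrite eqSS => /eqP ->.
by move=> [] lj; move: ne; rewrite (_ : l = j') ?eqxx //; apply: val_inj.
Qed.

Lemma iterLx_F n d A : Fd d A -> Fd (n + d) (iter n (@Lx K p) A).
Proof. by move=> FA; elim: n => //= n IH; apply: Lx_F. Qed.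

Lemma iterLx_top n A t (j j' : 'I_p) : Fd j' A -> j = (n + j')%N :> nat ->
  iter n (@Lx K p) A t j = A t j'.
Proof.
move=> FA; elim: n j => [|n IH] j /= jj; first by congr (A t _); apply: val_inj.
have lt : (n + j' < p)%N by apply: leq_ltn_trans (ltn_ord j); rewrite jj.
by rewrite (@Lx_top _ t _ (Ordinal lt)) ?IH //; apply: iterLx_F.
Qed.

Lemma iterLgE n A t j : iter n (@Lg K p) A t j = A (t - n%:R) j.
Proof.
elim: n t => [|n IH] t /=; first by rewrite subr0.
by rewrite LgE IH -addrA -opprD nat1r.
Qed.

Lemma rmulE A B t c : rmul A B t c =
  \sum_i \sum_j A i j * iter j (@Lx K p) B (t - (nat_of_ord i)%:R) c.
Proof.
rewrite /rmul summxE; apply: eq_bigr => i _; rewrite summxE.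
by apply: eq_bigr => j _; rewrite !mxE iterLgE.
Qed.

Lemma rmulE' A B t c : rmul A B t c =
  \sum_i \sum_j A i j * iter j (@Lx K p) B (t - i) c.
Proof. by rewrite rmulE; apply: eq_bigr => i _; rewrite natr_Zp. Qed.

Lemma rmul_F a b A B : Fd a A -> Fd b B -> Fd (a + b) (rmul A B).
Proof.
move=> FA FB t c abc; rewrite rmulE' big1 // => i _; rewrite big1 // => j _.
case: (leqP j a) => ja; last by rewrite FA ?mul0r.
rewrite (iterLx_F (n := j) FB) ?mulr0 //.
by apply: leq_ltn_trans abc; rewrite leq_add2r.
Qed.

Lemma rmul_top A B t (a b c : 'I_p) : Fd a A -> Fd b B -> c = (a + b)%N :> nat ->
  rmul A B t c = \sum_i A i a * B (t - i) b.
Proof.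
move=> FA FB cab; rewrite rmulE'; apply: eq_bigr => i _.
rewrite (bigD1 a) //= [X in _ + X]big1 ?addr0.
  by rewrite (iterLx_top (n := a) _ FB).
move=> j ja; case: (ltngtP j a) => [lt|gt|e].
- rewrite (iterLx_F (n := j) FB) ?mulr0 // cab ltn_add2r //.
- by rewrite FA ?mul0r.
- by move: ja; rewrite (_ : j = a) ?eqxx //; apply: val_inj.
Qed.

Lemma val_m1 : nat_of_ord (- (1 : 'I_p)) = q.+1.
Proof. by rewrite /= modn_small // subSS subn0 modn_small. Qed.

Lemma val_1 : nat_of_ord (1 : 'I_p) = 1%N.
Proof. by []. Qed.

Lemma eq_m1 (t : 'I_p) : (t == q.+1 :> nat) = (t == -1).
Proof. by rewrite -val_eqE /=; have := val_m1; rewrite /= => ->. Qed.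

Lemma sum_ind2 (F : 'I_p -> K) t : \sum_i F i * (i == t)%:R = F t.
Proof. by rewrite -(sum_ind1 F t); apply: eq_bigr => i _; rewrite eq_sym. Qed.

Lemma rone_F : Fd 0 (@rone K p).
Proof. by move=> t j j0; rewrite mxE -[j == 0%N :> nat]negbK -lt0n j0 andbF. Qed.

Lemma rone_top t : @rone K p t 0 = (t == 0)%:R.
Proof. by rewrite mxE andbT. Qed.

Lemma rginv_F : Fd 0 (@rginv K p).
Proof. by move=> t j j0; rewrite mxE -[j == 0%N :> nat]negbK -lt0n j0 andbF. Qed.

Lemma rginv_top t : @rginv K p t 0 = (t == -1)%:R.
Proof. by rewrite mxE andbT /= eq_m1. Qed.

Lemma rx_F : Fd 1 (@rx K p).
Proof. by move=> t j j1; rewrite mxE (_ : (j == 1%N :> nat) = false) ?andbF //; apply/negbTE; rewrite neq_ltn j1 orbT. Qed.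

Lemma rx_top t : @rx K p t 1 = (t == 0)%:R.
Proof. by rewrite mxE val_1 andbT. Qed.

Lemma eq_shift (x y z : 'I_p) : (x + z == y) = (x == y - z).
Proof. by apply/eqP/eqP => [<-|->]; rewrite ?addrK ?subrK. Qed.

Lemma Fd_opp d A : Fd d A -> Fd d (- A).
Proof. by move=> FA t j dj; rewrite mxE FA ?oppr0. Qed.

Lemma iter_ginv a : Fd 0 (iter a (rmul (@rginv K p)) (@rone K p)) /\
  forall t, iter a (rmul (@rginv K p)) (@rone K p) t 0 = (t == - a%:R)%:R.
Proof.
elim: a => [|a [F1 T1]] /=; first by split; [apply: rone_F | move=> t; rewrite oppr0 rone_top].
split; first by apply: (@rmul_F 0 0 _ _ rginv_F F1).
move=> t; rewrite (@rmul_top _ _ t 0 0 0 rginv_F F1) //.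
under eq_bigr => i _ do rewrite rginv_top mulrC.
rewrite sum_ind2 T1 opprK eq_shift -opprD.
by rewrite -natr1 addrC.
Qed.

Lemma rSx_F : Fd 1 (@rSx K p).
Proof. by apply: Fd_opp; apply: (@rmul_F 0 1 _ _ rginv_F rx_F). Qed.

Lemma rSx_top t : @rSx K p t 1 = - (t == -1)%:R.
Proof.
rewrite /rSx mxE (@rmul_top _ _ t 0 1 1 rginv_F rx_F) //.
under eq_bigr => i _ do rewrite rginv_top mulrC.
by rewrite sum_ind2 rx_top opprK eq_shift sub0r.
Qed.

Lemma iter_Sx B s (j : nat) : Fd 0 B -> (forall t, B t 0 = (t == s)%:R) ->
  Fd j (iter j (rmul (@rSx K p)) B) /\
  forall t (c : 'I_p), c = j :> nat ->
    iter j (rmul (@rSx K p)) B t c = (-1) ^+ j * (t == s - j%:R)%:R.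
Proof.
move=> FB TB; elim: j => [|j IH] /=.
  split=> // t c c0; rewrite mul1r subr0 -TB; congr (B t _); exact: val_inj.
case: IH => F1 T1.
split; first by rewrite -add1n; apply: rmul_F F1; apply: rSx_F.
move=> t c cj.
have ltj : (j < p)%N by rewrite -ltnS -cj ltnS ltnW.
rewrite (@rmul_top _ _ t 1 (Ordinal ltj) c rSx_F F1) //.
under eq_bigr => i _ do rewrite rSx_top mulNr mulrC -mulNr.
rewrite sum_ind2 opprK T1 // exprS mulN1r -mulNr.
by rewrite eq_shift -addrA -opprD -natr1 addrC.
Qed.

Lemma eq_flip (t i c : 'I_p) : (t == - i - c) = (i == - t - c).
Proof.
apply/eqP/eqP => e.
  by rewrite e; ring.
by rewrite e; ring.
Qed.

Lemma rS_top A t (c : 'I_p) : Fd c A ->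
  rS A t c = (-1) ^+ c * A (- t - (nat_of_ord c)%:R) c.
Proof.
move=> FA; rewrite /rS lin_extE.
have S0 i := iter_ginv (nat_of_ord i).
transitivity (\sum_i A i c * ((-1) ^+ c * (i == - t - (nat_of_ord c)%:R)%:R)).
  apply: eq_bigr => i _; case: (S0 i) => F0 T0.
  rewrite (bigD1 c) //= [X in _ + X]big1 ?addr0.
    case: (iter_Sx (nat_of_ord c) F0 T0) => _ -> //.
    by rewrite natr_Zp eq_flip.
  move=> j jc; case: (ltngtP j c) => [lt|gt|e].
  - case: (iter_Sx (nat_of_ord j) F0 T0) => Fj _.
    by rewrite Fj ?mulr0.
  - by rewrite FA ?mul0r.
  - by move: jc; rewrite (_ : j = c) ?eqxx //; apply: val_inj.
under eq_bigr => i _ do rewrite mulrCA.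
by rewrite -big_distrr /= sum_ind2.
Qed.

Lemma rbasis_eq A i0 j0 : (forall i j, A i j = ((i == i0) && (j == j0))%:R) ->
  A = rbasis K i0 j0.
Proof. by move=> E; apply/matrixP => i j; rewrite E /rbasis mxE. Qed.

Lemma rg_b : @rg K p = rbasis K 1 0.
Proof. by apply: rbasis_eq => i j; rewrite mxE -!val_eqE. Qed.
Lemma rone_b : @rone K p = rbasis K 0 0.
Proof. by apply: rbasis_eq => i j; rewrite mxE -!val_eqE. Qed.
Lemma rx_b : @rx K p = rbasis K 0 1.
Proof. by apply: rbasis_eq => i j; rewrite mxE -!val_eqE. Qed.

Lemma rmul_basis i0 j0 B :
  rmul (rbasis K i0 j0) B = iter i0 (@Lg K p) (iter j0 (@Lx K p) B).
Proof.
rewrite /rmul (bigD1 i0) //= [X in _ + X]big1 ?addr0.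
  rewrite (bigD1 j0) //= [X in _ + X]big1 ?addr0.
    by rewrite /rbasis mxE !eqxx scale1r.
  by move=> j ne; rewrite /rbasis mxE eqxx [j == j0](negbTE ne) scale0r.
move=> i ne; apply: big1 => j _.
by rewrite /rbasis mxE [i == i0](negbTE ne) scale0r.
Qed.

Lemma rmulZl c A B : rmul (c *: A) B = c *: rmul A B.
Proof.
rewrite /rmul scaler_sumr; apply: eq_bigr => i _; rewrite scaler_sumr.
by apply: eq_bigr => j _; rewrite mxE scalerA.
Qed.

Lemma rmulDl A1 A2 B : rmul (A1 + A2) B = rmul A1 B + rmul A2 B.
Proof.
rewrite /rmul -big_split; apply: eq_bigr => i _; rewrite -big_split.
by apply: eq_bigr => j _; rewrite mxE scalerDl.
Qed.

Lemma lin_ext0 f : lin_ext f (0 : H) = 0.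
Proof. by rewrite /lin_ext big1 // => i _; rewrite big1 // => j _; rewrite mxE scale0r. Qed.

Lemma rmul0r A : rmul A 0 = 0.
Proof.
rewrite /rmul big1 // => i _; rewrite big1 // => j _.
have -> : iter j (@Lx K p) 0 = 0 by elim: (nat_of_ord j) => //= n ->; apply: lin_ext0.
have -> : iter i (@Lg K p) 0 = 0 by elim: (nat_of_ord i) => //= n ->; apply: lin_ext0.
by rewrite scaler0.
Qed.

Lemma Lx0 : @Lx K p 0 = 0.
Proof. exact: lin_ext0. Qed.

Local Notation T := (RT K p).

Lemma sum_delta (M : lmodType K) (F : 'I_p -> 'I_p -> M) x y :
  \sum_k \sum_l (rbasis K k l x y) *: F k l = F x y.
Proof.
rewrite (bigD1 x) //= [X in _ + X]big1 ?addr0.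
  rewrite (bigD1 y) //= [X in _ + X]big1 ?addr0.
    by rewrite /rbasis mxE !eqxx scale1r.
  by move=> l ne; rewrite /rbasis mxE eqxx eq_sym (negbTE ne) scale0r.
move=> k ne; apply: big1 => l _.
by rewrite /rbasis mxE eq_sym (negbTE ne) scale0r.
Qed.

Lemma rbasisE i0 j0 i j : rbasis K i0 j0 i j = ((i == i0) && (j == j0))%:R :> K.
Proof. by rewrite /rbasis mxE. Qed.

Lemma rtmulDl (T1 T2 U : T) : rtmul (T1 + T2) U = rtmul T1 U + rtmul T2 U.
Proof.
apply/matrixP => a b; rewrite !mxE -!big_split; apply: eq_bigr => i _.
rewrite -!big_split; apply: eq_bigr => j _.
rewrite -!big_split; apply: eq_bigr => k _.
rewrite -!big_split; apply: eq_bigr => l _.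
by rewrite mxE rmulDl scalerDr.
Qed.

Lemma rtmul_tens i0 j0 B (U : T) a b :
  rtmul (rtens (rbasis K i0 j0) B) U a b =
  \sum_k \sum_l (rmul (rbasis K i0 j0) (rbasis K k l)) a b *: rmul B (U k l).
Proof.
rewrite mxE (bigD1 i0) //= [X in _ + X]big1 ?addr0.
  rewrite (bigD1 j0) //= [X in _ + X]big1 ?addr0.
    apply: eq_bigr => k _; apply: eq_bigr => l _.
    by rewrite mxE [rbasis K i0 j0 _ _]rbasisE !eqxx scale1r.
  move=> j ne; apply: big1 => k _; apply: big1 => l _.
  by rewrite mxE [rbasis K i0 j0 _ _]rbasisE eqxx (negbTE ne) andbF /= rmulZl scale0r scaler0.
move=> i ne; apply: big1 => j _; apply: big1 => k _; apply: big1 => l _.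
by rewrite mxE [rbasis K i0 j0 _ _]rbasisE (negbTE ne) /= rmulZl scale0r scaler0.
Qed.

Lemma rmul_one B : rmul (@rone K p) B = B.
Proof. by rewrite rone_b rmul_basis. Qed.
Lemma rmul_g B : rmul (@rg K p) B = Lg B.
Proof. by rewrite rg_b rmul_basis. Qed.
Lemma rmul_x B : rmul (@rx K p) B = Lx B.
Proof. by rewrite rx_b rmul_basis. Qed.

Lemma rtmul_Dg (U : T) a b : rtmul (@rDg K p) U a b = Lg (U (a - 1) b).
Proof.
rewrite /rDg {1}rg_b rtmul_tens.
under eq_bigr => k _ do under eq_bigr => l _ do
  rewrite -rg_b !rmul_g LgE.
exact: (sum_delta (fun k l => Lg (U k l))).
Qed.

Lemma rtmul_Dx (U : T) a b : rtmul (@rDx K p) U a b =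
  \sum_l (b == nextx l)%:R *: U a l + (nat_of_ord a)%:R *: U a b
  - (nat_of_ord (a - 1))%:R *: U (a - 1) b + Lx (U (a - 1) b).
Proof.
rewrite /rDx rtmulDl mxE [in X in X + _]rx_b [in X in _ + X]rg_b !rtmul_tens.
congr (_ + _); last first.
  under eq_bigr => k _ do under eq_bigr => l _ do
    rewrite -rg_b rmul_g rmul_x LgE.
  exact: (sum_delta (fun k l => Lx (U k l))).
under eq_bigr => k _ do under eq_bigr => l _ do
  rewrite -rx_b rmul_x rmul_one LxE !scalerDl scaleNr.
under eq_bigr => k _ do rewrite !big_split sumrN.
rewrite !big_split sumrN.
congr (_ + _ - _).
- under eq_bigr => k _ do under eq_bigr => l _ do rewrite scaler_suml.
  under eq_bigr => k _ do rewrite exchange_big.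
  rewrite exchange_big; apply: eq_bigr => m _.
  under eq_bigr => k _ do under eq_bigr => l _ do rewrite -scalerA.
  exact: (sum_delta (fun k l => (b == nextx m)%:R *: U k l)).
- under eq_bigr => k _ do under eq_bigr => l _ do rewrite mulrC -scalerA.
  exact: (sum_delta (fun k l => (nat_of_ord a)%:R *: U k l)).
- under eq_bigr => k _ do under eq_bigr => l _ do rewrite mulrC -scalerA.
  exact: (sum_delta (fun k l => (nat_of_ord (a - 1))%:R *: U k l)).
Qed.

Lemma Fd0 d : Fd d (0 : H).
Proof. by move=> t j _; rewrite mxE. Qed.
Lemma Fd_add d A B : Fd d A -> Fd d B -> Fd d (A + B).
Proof. by move=> FA FB t j dj; rewrite mxE FA ?FB ?addr0. Qed.
Lemma Fd_sub d A B : Fd d A -> Fd d B -> Fd d (A - B).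
Proof. by move=> FA FB; apply: Fd_add => //; apply: Fd_opp. Qed.
Lemma Fd_scale d c A : Fd d A -> Fd d (c *: A).
Proof. by move=> FA t j dj; rewrite mxE FA ?mulr0. Qed.

Lemma nextx_neq0 (l : 'I_p) : nat_of_ord (nextx l) != 0%N.
Proof. by rewrite nextxE; case: ifP. Qed.

Lemma sum_nextx0 (F : 'I_p -> H) (b : 'I_p) : b = 0%N :> nat ->
  \sum_l (b == nextx l)%:R *: F l = 0.
Proof.
move=> b0; apply: big1 => l _; case: eqP => [e|]; last by rewrite scale0r.
by have := nextx_neq0 l; rewrite -e b0.
Qed.

Lemma sum_nextx (F : 'I_p -> H) (b b' : 'I_p) : F ord_max = 0 ->
  b = b'.+1 :> nat -> \sum_l (b == nextx l)%:R *: F l = F b'.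
Proof.
move=> Fm bb; rewrite (bigD1 b') //= [X in _ + X]big1 ?addr0.
  suff -> : b == nextx b' by rewrite scale1r.
  apply/eqP/val_inj; rewrite /= nextxE bb; case: eqP => // e.
  by have := ltn_ord b; rewrite bb e ltnn.
move=> l ne; case: eqP => [e|]; last by rewrite scale0r.
move: bb; rewrite e nextxE; case: eqP => [lp|_].
  move=> [] b0; rewrite (_ : l = ord_max) ?Fm ?scaler0 //; apply: val_inj.
  by move/eqP: lp; rewrite eqSS => /eqP.
by move=> [] lj; move: ne; rewrite (_ : l = b') ?eqxx //; apply: val_inj.
Qed.

Definition TF (d : nat) (U : T) :=
  forall a b : 'I_p, ((d < b)%N -> U a b = 0) /\ Fd (d - b) (U a b).

Definition Xk k := iter k (rtmul (@rDx K p)) (rtens (@rone K p) (@rone K p)).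

Lemma X0E a b : Xk 0 a b = ((a == 0) && (b == 0))%:R *: @rone K p.
Proof. by rewrite /Xk /= mxE rone_b rbasisE. Qed.

Lemma ord_pred (b : 'I_p) : (0 < b)%N -> exists b' : 'I_p, nat_of_ord b = b'.+1.
Proof.
move=> b0; exists (Ordinal (leq_ltn_trans (leq_pred b) (ltn_ord b))).
by rewrite /= prednK.
Qed.

Lemma ord_of (n : nat) : (n < p)%N -> exists c : 'I_p, nat_of_ord c = n.
Proof. by move=> lt; exists (Ordinal lt). Qed.

Lemma eq_sub1 (a y : 'I_p) : (a - 1 == y) = (a == y + 1).
Proof. by apply/eqP/eqP => [<-|->]; rewrite ?subrK ?addrK. Qed.

Lemma X_prop k : (k < p)%N -> TF k (Xk k) /\
  forall (a b t c : 'I_p), (b <= k)%N -> c = (k - b)%N :> nat ->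
    Xk k a b t c = 'C(k, b)%:R * (a == (k - b)%N%:R)%:R * (t == 0)%:R.
Proof.
elim: k => [|k IH] lt.
  split.
    move=> a b; rewrite X0E; split.
      by move=> b0; rewrite (_ : b == 0 = false) ?andbF ?scale0r //; apply/negbTE; rewrite -val_eqE /= -lt0n.
    by apply: Fd_scale; apply: rone_F.
  move=> a b t c b0 c0; rewrite X0E mxE.
  have -> : b = 0 by apply: val_inj => /=; move: b0; rewrite leqn0 => /eqP.
  have -> : c = 0 by apply: val_inj.
  by rewrite rone_top eqxx andbT bin0 mul1r subn0.
have [F1 T1] := IH (ltnW lt).
have Fm : forall a, Xk k a ord_max = 0.
  by move=> a; apply: (F1 a ord_max).1 => /=; rewrite -ltnS.
have XE a b : Xk k.+1 a b = rtmul (@rDx K p) (Xk k) a b by [].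
split.
  move=> a b; rewrite XE rtmul_Dx; split.
    move=> kb; have [b' bb] := ord_pred (leq_ltn_trans (leq0n _) kb).
    rewrite (sum_nextx (Fm a) bb) (F1 a b').1; last by rewrite -ltnS -bb.
    have kb2 : (k < b)%N := ltnW kb.
    by rewrite (F1 a b).1 // (F1 (a - 1) b).1 // Lx0 !scaler0 !addr0 subr0.
  apply: Fd_add; first apply: Fd_sub; first apply: Fd_add.
  - case: (posnP b) => [b0|bp].
      by rewrite (sum_nextx0 _ b0); apply: Fd0.
    have [b' bb] := ord_pred bp.
    by rewrite (sum_nextx (Fm a) bb) bb subSS; apply: (F1 a b').2.
  - by apply: Fd_scale; apply: (Fd_mono _ (F1 a b).2); rewrite leq_sub2r.
  - by apply: Fd_scale; apply: (Fd_mono _ (F1 (a - 1) b).2); rewrite leq_sub2r.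
  - case: (leqP b k) => bk.
      by rewrite subSn //; apply: Lx_F; apply: (F1 (a - 1) b).2.
    by rewrite (F1 (a - 1) b).1 // Lx0; apply: Fd0.
move=> a b t c bk cE; rewrite XE rtmul_Dx !mxE.
case: (posnP b) => [b0|bp].
  rewrite (sum_nextx0 _ b0) mxE add0r.
  rewrite b0 subn0 in cE.
  have [c' c'E] := ord_of (ltnW (lt : (k.+1 < p)%N)).
  have s1 : (k - b < c)%N by rewrite cE ltnS leq_subr.
  rewrite (F1 a b).2 // (F1 (a - 1) b).2 // !mulr0 subr0 add0r.
  rewrite (@Lx_top _ t _ c') ?cE ?c'E //; last by have := (F1 (a - 1) b).2; rewrite b0 subn0.
  rewrite (T1 (a - 1) b t c') ?b0 ?c'E ?subn0 // !bin0 eq_sub1.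
  by rewrite natr1.
have [b' bb] := ord_pred bp.
rewrite (sum_nextx (Fm a) bb).
have b'k : (b' <= k)%N by rewrite -ltnS -bb.
have cE' : nat_of_ord c = (k - b')%N by rewrite cE bb subSS.
rewrite (T1 a b' t c b'k cE').
case: (leqP b k) => bk'.
  have cE2 : nat_of_ord c = (k - b).+1 by rewrite cE subSn.
  have s2 : (k - b < c)%N by rewrite cE2.
  rewrite (F1 a b).2 // (F1 (a - 1) b).2 // !mulr0 subr0 addr0.
  have [c' c'E] := ord_of (leq_ltn_trans (leq_subr b k) (ltnW (lt : (k.+1 < p)%N))).
  rewrite (@Lx_top _ t c c'); first last.
  - by rewrite cE2 c'E.
  - by rewrite c'E; exact: (F1 _ _).2.
  rewrite (T1 (a - 1) b t c' bk' c'E).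
  have e1 : (k - b' = (k - b).+1)%N by rewrite bb subnSK // -ltnS -bb.
  by rewrite eq_sub1 natr1 -e1 bb subSS binS natrD !mulrDl addrC.
have bk1 : nat_of_ord b = k.+1 by apply/eqP; rewrite eqn_leq bk' andbT.
have b'k1 : nat_of_ord b' = k by move: bk1; rewrite bb => -[].
rewrite (F1 a b).1 ?(F1 (a - 1) b).1 ?bk1 // !mxE !mulr0 subr0 !addr0 Lx0 mxE addr0.
by rewrite b'k1 !subnn !binn.
Qed.

Lemma rDelta_b i k : rDelta (rbasis K i k) = iter i (rtmul (@rDg K p)) (Xk k).
Proof.
rewrite /rDelta (bigD1 i) //= [X in _ + X]big1 ?addr0.
  rewrite (bigD1 k) //= [X in _ + X]big1 ?addr0.
    by apply/matrixP => a b; rewrite !mxE !eqxx scale1r.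
  move=> j ne; apply/matrixP => a b.
  by rewrite !mxE eqxx (negbTE ne) scale0r.
move=> j ne; apply: big1 => l _; apply/matrixP => a b.
by rewrite !mxE (negbTE ne) scale0r.
Qed.

Lemma iterDgE (n : nat) (U : T) a b :
  iter n (rtmul (@rDg K p)) U a b = iter n (@Lg K p) (U (a - n%:R) b).
Proof.
elim: n a => [|n IH] a /=; first by rewrite subr0.
by rewrite rtmul_Dg IH -addrA -opprD nat1r.
Qed.

Lemma iterLg0 n : iter n (@Lg K p) 0 = 0.
Proof. by elim: n => //= n ->; apply: lin_ext0. Qed.

Lemma iterLg_F n d A : Fd d A -> Fd d (iter n (@Lg K p) A).
Proof. by move=> FA t j dj; rewrite iterLgE FA. Qed.

Lemma eq_subl (a i y : 'I_p) : (a - i == y) = (a == i + y).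
Proof. by apply/eqP/eqP => [<-|->]; rewrite ?[i + _]addrC ?subrK ?addrK. Qed.

Lemma Delta_prop (i k : 'I_p) : TF k (rDelta (rbasis K i k)) /\
  forall (a b t c : 'I_p), (b <= k)%N -> c = (k - b)%N :> nat ->
    rDelta (rbasis K i k) a b t c =
    'C(k, b)%:R * (a == i + (k - b)%N%:R)%:R * (t == i)%:R.
Proof.
have [F1 T1] := X_prop (ltn_ord k).
rewrite rDelta_b; split.
  move=> a b; rewrite iterDgE; split.
    by move=> kb; rewrite (F1 _ _).1 // iterLg0.
  by apply: iterLg_F; apply: (F1 _ _).2.
move=> a b t c bk cE; rewrite iterDgE iterLgE !natr_Zp T1 //.
by rewrite eq_subl subr_eq0.
Qed.

Definition Pprop m (c : 'I_p -> 'I_p -> K) :=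
  (forall k : 'I_p, \sum_t c k t = (m%:R) ^+ k) /\
  forall i k : 'I_p, Fd k (rP m (rbasis K i k)) /\
    forall t, rP m (rbasis K i k) t k = c k (t - i * m%:R).

Lemma Fd_sum d (I : finType) (F : I -> H) : (forall x, Fd d (F x)) -> Fd d (\sum_x F x).
Proof.
move=> FF; apply: (big_ind (Fd d)) => //; first exact: Fd0.
by move=> ? ?; apply: Fd_add.
Qed.

Lemma P0 : Pprop 0 (fun k u => ((k == 0) && (u == 0))%:R).
Proof.
have PE i k : rP 0 (rbasis K i k) = (k == 0)%:R *: @rone K p.
  congr (_ *: _); rewrite /reps (bigD1 i) //= [X in _ + X]big1 ?addr0.
    rewrite (bigD1 k) //= [X in _ + X]big1 ?addr0.
      by rewrite rbasisE !eqxx mulr1.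
    by move=> j ne; rewrite rbasisE (negbTE ne) andbF mulr0.
  by move=> j ne; apply: big1 => l _; rewrite rbasisE (negbTE ne) mulr0.
split.
  move=> k; case: (k =P 0) => [->|ne] /=.
    by rewrite expr0 (bigD1 0) //= [X in _ + X]big1 ?addr0 // => t /negbTE ->.
  rewrite big1 // expr0n; case: eqP => // k0; case: ne; apply: val_inj.
  by rewrite /= k0.
move=> i k; rewrite PE; split.
  by apply: Fd_scale; apply: (Fd_mono _ rone_F).
move=> t; rewrite mxE mulr0 subr0; case: (k =P 0) => [->|]; last by rewrite mul0r.
by rewrite rone_top mul1r.
Qed.

Lemma P1 : Pprop 1 (fun k u => (u == 0)%:R).
Proof.
split.
  by move=> k; rewrite expr1n (bigD1 0) //= [X in _ + X]big1 ?addr0 // => t /negbTE ->.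
move=> i k; split.
  move=> t j kj; rewrite rbasisE (_ : j == k = false) ?andbF //.
  by apply/negbTE; rewrite -val_eqE /= neq_ltn kj orbT.
by move=> t; rewrite /= rbasisE eqxx andbT mulr1 subr_eq0.
Qed.

Lemma sum_shift (f : 'I_p -> K) z : \sum_u f (u - z) = \sum_u f u.
Proof. by rewrite [RHS](reindex_inj (addIr (- z))). Qed.

Lemma rPSS m A : rP m.+2 A =
  \sum_i \sum_j rmul (rP m.+1 (rbasis K i j)) (rDelta A i j).
Proof. by []. Qed.

Lemma eq_tsi (t s i : 'I_p) : (t - s == i) = (s == t - i).
Proof. by apply/eqP/eqP => [<-|->]; ring. Qed.

Lemma P_step m c : Pprop m.+1 c -> Pprop m.+2 (fun k u =>
  \sum_(b : 'I_p | (b <= k)%N) 'C(k, b)%:R * c b (u - (k - b)%N%:R * (m.+1)%:R)).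
Proof.
move=> [tot IH]; split.
  move=> k; rewrite exchange_big /=.
  under eq_bigr => b _ do rewrite -big_distrr /= (sum_shift (c b)) tot.
  rewrite -[(m.+2)%:R]natr1 exprD1n (big_ord_widen p (fun b => (m.+1)%:R ^+ b *+ 'C(k, b))) //.
  by apply: eq_big => [b|b _]; rewrite ?ltnS // mulr_natl.
move=> i k; split.
  apply: Fd_sum => a; apply: Fd_sum => b.
  case: (leqP b k) => bk.
    rewrite -(subnKC bk); apply: rmul_F; first exact: (IH a b).1.
    exact: ((Delta_prop i k).1 a b).2.
  by rewrite (((Delta_prop i k).1 a b).1 bk) rmul0r; apply: Fd0.
move=> t.
have [FD TD] := Delta_prop i k.
transitivity (\sum_a \sum_(b : 'I_p | (b <= k)%N) 'C(k, b)%:R * (a == i + (k - b)%N%:R)%:R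
   * c b (t - i - a * (m.+1)%:R)).
  rewrite rPSS summxE; apply: eq_bigr => a _; rewrite summxE [RHS]big_mkcond.
  apply: eq_bigr => b _; case: (leqP b k) => bk /=; last first.
    by rewrite ((FD a b).1 bk) rmul0r mxE.
  have [kb kbE] := ord_of (leq_ltn_trans (leq_subr b k) (ltn_ord k)).
  have FDb : Fd kb (rDelta (rbasis K i k) a b) by rewrite kbE; exact: (FD a b).2.
  rewrite (@rmul_top _ _ t b kb k (IH a b).1 FDb) ?kbE ?subnKC //.
  under eq_bigr => s _ do rewrite (IH a b).2 (TD a b (t - s) kb bk kbE).
  under eq_bigr => s _ do rewrite eq_tsi mulrA.
  by rewrite sum_ind2 mulrC.
rewrite exchange_big /=; apply: eq_bigr => b bk.
under eq_bigr => a _ do rewrite mulrAC.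
rewrite sum_ind2; congr (_ * c b _).
rewrite -[(m.+2)%:R]natr1.
ring.
Qed.

Lemma P_all m : exists c, Pprop m c.
Proof.
case: m => [|m]; first by exists (fun k u => ((k == 0) && (u == 0))%:R); exact: P0.
elim: m => [|m [c Pc]]; first by exists (fun k u => (u == 0)%:R); exact: P1.
by eexists; apply: P_step Pc.
Qed.

Lemma nu_formula m c : Pprop m c -> radford_nu K p m.+1 =
  \sum_(k : 'I_p) (-1) ^+ k * \sum_(i : 'I_p) c k (- k - i * (m.+1)%:R).
Proof.
move=> [_ Pc]; rewrite /radford_nu /rtrace /= exchange_big /=.
apply: eq_bigr => k _; rewrite big_distrr /=; apply: eq_bigr => i _.
rewrite rS_top; last exact: (Pc i k).1.
rewrite (Pc i k).2 natr_Zp; congr (_ * c k _).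
rewrite -[(m.+1)%:R]natr1; ring.
Qed.

Lemma nu_val (hp : (q.+2) \in [pchar K]) n : (0 < n)%N ->
  radford_nu K p n = (~~ (p %| n)%N)%:R.
Proof.
case: n => // m _; have [c Pc] := P_all m.
rewrite (nu_formula Pc).
case: (boolP (p %| m.+1)%N) => [dv|ndv] /=.
  apply: big1 => k _.
  have -> : ((m.+1)%:R : 'I_p) = 0.
    by rewrite Zp_nat; apply: val_inj => /=; apply/eqP; exact: dv.
  under eq_bigr => i _ do rewrite mulr0 subr0.
  by rewrite sumr_const card_ord -mulr_natr (pcharf0 hp) !mulr0.
have unit : ((m.+1)%:R : 'I_p) \is a GRing.unit.
  rewrite (unitZpE _ (isT : (1 < p)%N)) prime_coprime ?(pcharf_prime hp) //.
have tot : forall k : 'I_p, \sum_(i : 'I_p) c k (- k - i * (m.+1)%:R) = (m%:R) ^+ k.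
  move=> k; rewrite -(proj1 Pc k).
  rewrite [RHS](reindex_inj (h := fun i => - k - i * (m.+1)%:R)) //.
  by move=> x y /= /addrI /oppr_inj /(mulIr unit).
under eq_bigr => k _ do rewrite tot -exprMn mulN1r.
set x := - (m%:R : K).
have xp : x ^+ p = x.
  by rewrite -(pFrobenius_autE hp) rmorphN rmorph_nat.
have x1 : x - 1 != 0.
  by rewrite /x -opprD natr1 oppr_eq0 -(dvdn_pcharf hp).
apply: (mulfI x1); rewrite -subrX1 xp mulr1.
by [].
Qed.
End R.

Lemma nu_gen (K : fieldType) (p : nat) (hp : p \in [pchar K]) n : (0 < n)%N ->
  radford_nu K p n = (~~ (p %| n)%N)%:R.
Proof.
have Hp1 : (1 < p)%N := prime_gt1 (pcharf_prime hp).
move: hp Hp1; case: p => [|[|q]] // hp _; exact: (nu_val hp).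
Qed.

Lemma sat_part (K : fieldType) (p : nat) (hp : p \in [pchar K]) :
  seq_satisfies (radford_nu K p) ('X^p - 1).
Proof.
have pr := pcharf_prime hp; have p0 := prime_gt0 pr.
move: hp pr p0; case: p => // p hp pr p0.
move=> n n1; rewrite size_Xn_sub_1 // big_ord_recr /= big_ord_recl /=.
rewrite big1 ?add0r; last first.
  move=> i _; rewrite coefB coefXn coef1 /=.
  by rewrite /bump /= add1n eqSS (ltn_eqF (ltn_ord i)) subr0 mul0r.
rewrite !coefB !coefXn !coef1 eqxx /= subr0 sub0r mul1r mulN1r addr0.
rewrite !nu_gen ?addn_gt0 ?n1 // addn0 dvdn_addl ?dvdnn //.
by rewrite addNr.
Qed.

Lemma ndvd (p i i0 : nat) : (0 < p)%N -> (i < p)%N -> (i0 < p)%N -> i != i0 ->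
  ~~ (p %| p - i0 + i)%N.
Proof.
move=> p0 ip i0p ne; apply/negP => /dvdnP [k vk].
move/eqP: ne => ne.
have : (k = 1)%N by nia.
move=> k1; rewrite k1 mul1n in vk; lia.
Qed.

Lemma min_part (K : fieldType) (p : nat) (hp : p \in [pchar K]) (g : {poly K}) :
  g != 0 -> seq_satisfies (radford_nu K p) g -> leq (size ('X^p - 1 : {poly K})) (size g).
Proof.
have pr := pcharf_prime hp; have p0 := prime_gt0 pr; have p1 := prime_gt1 pr.
move=> g0 sg; rewrite size_Xn_sub_1 //.
rewrite ltnNge; apply/negP => gs.
set N := size g in gs.
have N0 : (0 < N)%N by rewrite size_poly_gt0.
set s := \sum_(i < N) g`_i.
have key : forall i0, (i0 < N)%N -> g`_i0 = s.
  move=> i0 lt; have := sg (p - i0)%N.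
  rewrite subn_gt0 (leq_trans lt gs) => /(_ isT).
  rewrite (bigD1 (Ordinal lt)) //= subnK ?(ltnW (leq_trans lt gs)) //.
  rewrite (nu_gen hp) ?prime_gt0 // dvdnn mulr0 add0r => E.
  rewrite /s (bigD1 (Ordinal lt)) //= -[LHS]addr0; congr (_ + _).
  symmetry; rewrite -[RHS]E; apply: eq_bigr => i ne.
  have ip : (i < p)%N := leq_trans (ltn_ord i) gs.
  have i0p : (i0 < p)%N := leq_trans lt gs.
  have nei : (nat_of_ord i != i0) by move: ne; rewrite -val_eqE.
  rewrite (nu_gen hp); last by rewrite addn_gt0 subn_gt0 i0p.
  by rewrite (ndvd p0 ip i0p nei) mulr1.
have lead : s != 0.
  rewrite -(key N.-1) ?prednK // -lead_coefE lead_coef_eq0 //.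
have sN : s *+ N = s.
  by rewrite {2}/s (eq_bigr (fun _ => s)) ?sumr_const ?card_ord // => i _; apply: key.
have N1 : N = 1%N.
  have sN' : s *+ N.-1 = 0.
    by apply: (@addrI _ s); rewrite -mulrS prednK // sN addr0.
  move: sN'; rewrite -mulr_natr => /eqP; rewrite mulf_eq0 (negbTE lead) /= -(dvdn_pcharf hp) => dv.
  case: (posnP N.-1) => [e|pos].
    by rewrite -(prednK N0) e.
  have le := dvdn_leq pos dv; have : (N.-1 < p)%N by rewrite -ltnS prednK.
  by rewrite ltnNge le.
have N1s : size g = 1%N := N1.
have := sg 1%N isT; rewrite N1s big_ord1 /=.
rewrite nu_gen // (negbTE (_ : ~~ (p %| 1)%N)) ?mulr1; last by rewrite dvdn1 neq_ltn p1 orbT.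
by move=> e; move: lead; rewrite -(key 0%N) ?N1 // e eqxx.
Qed.

Unset Implicit Arguments.

Theorem proposition3p4 (K : closedFieldType) (p : nat) (hp : p \in [pchar K]) :
  is_minimal_poly_seq (radford_nu K p) ('X^p - 1).
Proof.
split.
- exact: monic_Xn_sub_1 (prime_gt0 (pcharf_prime hp)).
- exact: sat_part.
- by move=> g g0 sg; apply: min_part.
Qed.
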